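(* Let $f$ be the solution of the radial Loewner PDE $$\frac{\partial f}{\partial t}(z,t)=-z f'(z,t)\,\frac{e^{it}+z}{e^{it}-z},\qquad f(z,0)=z,\quad (z,t)\in\mathbb{D}\times[0,\infty),$$ which is given by $f(z,t)=\phi^{-1}(e^{(i-1)t}\phi(e^{-it}z))$ with $\phi(z)=z(z-i)^{i-1}$ (a univalent function on $\mathbb{D}$). Let $\gamma(t):=f(e^{it},t)$, $t\ge0$, be the trace of the tip point (the boundary value of $f(\cdot,t)$ at $e^{it}$, equivalently $\gamma(t)=\phi^{-1}(e^{(i-1)t}\phi(1))$), and write $\gamma(t)=r(t)e^{i\Theta(t)}$ with $\Theta$ continuous and $\Theta(0)=0$. Then $r$ is decreasing with $r(t)\to0$ as $t\to\infty$, and $\Theta$ is increasing (with $\Theta'(t)>0$ for $t>0$) and $\Theta(t)\to\infty$ as $t\to\infty$; i.e. $\gamma$ spirals about the origin.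
   Context: $\mathbb{D}$ is the unit disc; $f'$ denotes $\partial f/\partial z$. The power $(z-i)^{i-1}$ is defined via a holomorphic branch of $\log(z-i)$ on $\mathbb{D}$. *)

(* Defs.v *)
From Stdlib Require Import Reals.
From Coquelicot Require Import Coquelicot.
Open Scope R_scope.

Definition Cexp (z : C) : C :=
  (exp (Re z) * cos (Im z), exp (Re z) * sin (Im z)).

(* principal argument, in (-PI, PI] (for z <> 0) *)
Definition Arg (z : C) : R :=
  if Rle_dec 0 (Im z) then acos (Re z / Cmod z) else - acos (Re z / Cmod z).

Definition Clog (z : C) : C := (ln (Cmod z), Arg z).

(* phi(z) = z (z - i)^(i-1), with the principal branch of log(z - i),
   which is holomorphic on the unit disc (z - i lies in the lower half plane)
   and also at z = 1. *)
Definition phi (z : C) : C :=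
  Cmult z (Cexp (Cmult (Cminus Ci 1) (Clog (Cminus z Ci)))).

(* the defining properties of the tip trace gamma(t) = phi^{-1}(e^{(i-1)t} phi(1))
   and of a continuous argument Theta with Theta(0) = 0 *)
Definition tip_trace (gamma : R -> C) (Theta : R -> R) : Prop :=
  gamma 0 = RtoC 1 /\
  (forall t, 0 < t -> Cmod (gamma t) < 1) /\
  (forall t, 0 <= t ->
     phi (gamma t) = Cmult (Cexp (Cmult (Cminus Ci 1) (RtoC t))) (phi (RtoC 1))) /\
  (forall t, 0 <= t ->
     filterlim Theta (within (fun s => 0 <= s) (locally t)) (locally (Theta t))) /\
  Theta 0 = 0 /\
  (forall t, 0 <= t ->
     gamma t = Cmult (RtoC (Cmod (gamma t))) (Cexp (Cmult Ci (RtoC (Theta t))))).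

(* Main.v *)
Require Import Defs.
From Stdlib Require Import Reals.
From Coquelicot Require Import Coquelicot.
From Stdlib Require Import Lra Lia Psatz ClassicalEpsilon.
Open Scope R_scope.

Definition Xf r t := exp r * cos t.
Definition Yf r t := exp r * sin t.
Definition Dd r t := Xf r t ^ 2 + (Yf r t - 1) ^ 2.
Definition At r t := atan (Xf r t / (1 - Yf r t)).
Definition E r t := r + t + PI/2 - 2 * At r t.
Definition Tf r t := (t - r)/2 + ln (Dd r t) / 2 - ln 2 / 2.
Definition Eth r t := (1 - exp r ^ 2) / Dd r t.
Definition Erh r t := 1 - 2 * Xf r t / Dd r t.

Lemma Dd_pos r t : Yf r t < 1 -> 0 < Dd r t.
Proof. intros H. unfold Dd. nra. Qed.

Lemma XY2 r t : Xf r t ^ 2 + Yf r t ^ 2 = exp r ^ 2.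
Proof. unfold Xf, Yf. pose proof (sin2_cos2 t). unfold Rsqr in H. nra. Qed.

Lemma E_dth r t : Yf r t < 1 -> is_derive (fun u => E r u) t (Eth r t).
Proof.
  intros H. pose proof (Dd_pos r t H) as HD. unfold E, At, Eth, Dd, Xf, Yf in *.
  auto_derive.
  - lra.
  - pose proof (sin2_cos2 t). unfold Rsqr in *.
    assert (Hn : 1 + - (exp r * sin t) <> 0) by lra.
    field_simplify_eq; [|split; [nra|lra]..].
    assert (Hc: cos t ^ 2 = 1 - sin t ^2) by nra.
    try replace (cos t ^ 4) with ((cos t ^ 2)^2) by ring; rewrite ?Hc; ring.
Qed.

Lemma E_drh r t : Yf r t < 1 -> is_derive (fun u => E u t) r (Erh r t).
Proof.
  intros H. pose proof (Dd_pos r t H) as HD. unfold E, At, Erh, Dd, Xf, Yf in *.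
  auto_derive.
  - lra.
  - pose proof (sin2_cos2 t). unfold Rsqr in *.
    assert (Hn : 1 + - (exp r * sin t) <> 0) by lra.
    field_simplify_eq; [|split; [nra|lra]..].
    assert (Hc: cos t ^ 2 = 1 - sin t ^2) by nra.
    try replace (cos t ^ 4) with ((cos t ^ 2)^2) by ring; rewrite ?Hc; ring.
Qed.

Lemma T_dth r t : Yf r t < 1 -> is_derive (fun u => Tf r u) t (Erh r t / 2).
Proof.
  intros H. pose proof (Dd_pos r t H) as HD. unfold Tf, Erh, Dd, Xf, Yf in *.
  auto_derive.
  - nra.
  - pose proof (sin2_cos2 t). unfold Rsqr in *.
    field_simplify_eq; [|nra..].
    assert (Hc: cos t ^ 2 = 1 - sin t ^2) by nra.
    try replace (cos t ^ 4) with ((cos t ^ 2)^2) by ring; rewrite ?Hc; ring.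
Qed.

Lemma T_drh r t : Yf r t < 1 -> is_derive (fun u => Tf u t) r (- Eth r t / 2).
Proof.
  intros H. pose proof (Dd_pos r t H) as HD. unfold Tf, Eth, Dd, Xf, Yf in *.
  auto_derive.
  - nra.
  - pose proof (sin2_cos2 t). unfold Rsqr in *.
    field_simplify_eq; [|nra..].
    assert (Hc: cos t ^ 2 = 1 - sin t ^2) by nra.
    try replace (cos t ^ 4) with ((cos t ^ 2)^2) by ring; rewrite ?Hc; ring.
Qed.

Lemma mvt (f f' : R -> R) a b : a < b ->
  (forall c, a <= c <= b -> is_derive f c (f' c)) ->
  exists c, a < c < b /\ f b - f a = f' c * (b - a).
Proof.
  intros Hab Hd. destruct (MVT_cor2 f f' a b Hab) as [c [H1 H2]].
  - intros c Hc. apply is_derive_Reals. auto.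
  - exists c. split; auto.
Qed.

Lemma incr_deriv (f f' : R -> R) a b :
  (forall c, a <= c <= b -> is_derive f c (f' c)) ->
  (forall c, a < c < b -> 0 < f' c) -> a < b -> f a < f b.
Proof.
  intros Hd Hp Hab. destruct (mvt f f' a b Hab Hd) as [c [Hc Hm]].
  specialize (Hp c Hc). nra.
Qed.

Lemma Y_lt1 r t : r < 0 -> Yf r t < 1.
Proof.
  intros H. unfold Yf. pose proof (SIN_bound t). pose proof (exp_increasing r 0 H).
  rewrite exp_0 in H1. pose proof (exp_pos r). nra.
Qed.

Lemma Eth_pos r t : r < 0 -> 0 < Eth r t.
Proof.
  intros H. unfold Eth. pose proof (Dd_pos r t (Y_lt1 r t H)).
  pose proof (exp_increasing r 0 H). rewrite exp_0 in H1. pose proof (exp_pos r).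
  apply Rdiv_lt_0_compat; nra.
Qed.

Lemma E_incr r t1 t2 : r < 0 -> t1 < t2 -> E r t1 < E r t2.
Proof.
  intros Hr Ht. apply (incr_deriv (fun u => E r u) (Eth r)); auto.
  - intros c _. apply E_dth, Y_lt1, Hr.
  - intros c _. apply Eth_pos, Hr.
Qed.

Lemma E_bounds r t : r + t - PI/2 < E r t < r + t + 3 * PI / 2.
Proof.
  unfold E. pose proof (atan_bound (Xf r t / (1 - Yf r t))). unfold At. lra.
Qed.

Lemma E_cont_t r t : r < 0 -> continuous (fun u => E r u) t.
Proof.
  intros Hr. apply (@ex_derive_continuous R_AbsRing R_NormedModule). eexists. apply E_dth, Y_lt1, Hr.
Qed.

Lemma E_cont_r r t : r < 0 -> continuous (fun u => E u t) r.
Proof.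
  intros Hr. apply (@ex_derive_continuous R_AbsRing R_NormedModule). eexists. apply E_drh, Y_lt1, Hr.
Qed.

Lemma thc_ex r : r < 0 -> {t | E r t = 0}.
Proof.
  intros Hr.
  destruct (IVT_gen_consistent (fun u => E r u) (-r - 2*PI) (-r + PI) 0) as [x [_ Hx]].
  - intros x. apply E_cont_t, Hr.
  - pose proof (E_bounds r (-r - 2*PI)). pose proof (E_bounds r (-r + PI)).
    pose proof PI_RGT_0.
    rewrite Rmin_left, Rmax_right; lra.
  - exists x. exact Hx.
Defined.

Definition thc r := match Rlt_dec r 0 with left H => proj1_sig (thc_ex r H) | right _ => 0 end.

Lemma thc_spec r : r < 0 -> E r (thc r) = 0.
Proof.
  intros Hr. unfold thc. destruct (Rlt_dec r 0); [|lra].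
  exact (proj2_sig (thc_ex r r0)).
Qed.

Lemma thc_uniq r t : r < 0 -> E r t = 0 -> t = thc r.
Proof.
  intros Hr Ht. pose proof (thc_spec r Hr).
  destruct (Rtotal_order t (thc r)) as [H1|[H1|H1]]; auto.
  - pose proof (E_incr r _ _ Hr H1). lra.
  - pose proof (E_incr r _ _ Hr H1). lra.
Qed.

Lemma thc_bounds r : r < 0 -> - r - 3 * PI / 2 < thc r /\ thc r < - r + PI / 2.
Proof.
  intros Hr. pose proof (thc_spec r Hr). pose proof (E_bounds r (thc r)). lra.
Qed.

Lemma cont_ed (f : R -> R) x : continuous f x ->
  forall eps, 0 < eps -> exists d, 0 < d /\ forall y, Rabs (y - x) < d -> Rabs (f y - f x) < eps.
Proof.
  intros H eps He. apply continuity_pt_filterlim in H.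
  unfold continuity_pt, continue_in, limit1_in, limit_in in H.
  destruct (H eps He) as [d [Hd H']]. exists d. split; auto.
  intros y Hy. destruct (Req_dec y x) as [->|Hne].
  - rewrite Rminus_eq_0, Rabs_R0. lra.
  - apply (H' y). split; [unfold D_x, no_cond; auto|]. simpl. unfold R_dist. auto.
Qed.

Lemma ed_cont (f : R -> R) x :
  (forall eps, 0 < eps -> exists d, 0 < d /\ forall y, Rabs (y - x) < d -> Rabs (f y - f x) < eps) ->
  continuous f x.
Proof.
  intros H. apply continuity_pt_filterlim.
  unfold continuity_pt, continue_in, limit1_in, limit_in.
  intros eps He. destruct (H eps He) as [d [Hd H']]. exists d. split; auto.
  intros y [_ Hy]. simpl in *. unfold R_dist in *. auto.
Qed.

Lemma thc_cont r0 : r0 < 0 -> continuous thc r0.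
Proof.
  intros Hr. apply ed_cont. intros eps He.
  set (t0 := thc r0).
  assert (Hp : 0 < E r0 (t0 + eps)).
  { rewrite <- (thc_spec r0 Hr). apply E_incr; unfold t0; lra. }
  assert (Hm : E r0 (t0 - eps) < 0).
  { rewrite <- (thc_spec r0 Hr). apply E_incr; unfold t0; lra. }
  destruct (cont_ed _ _ (E_cont_r r0 (t0 + eps) Hr) _ Hp) as [d1 [Hd1 H1]].
  destruct (cont_ed _ _ (E_cont_r r0 (t0 - eps) Hr) (- E r0 (t0 - eps)) ltac:(lra)) as [d2 [Hd2 H2]].
  exists (Rmin (Rmin d1 d2) (- r0)). split.
  { apply Rmin_glb_lt; [apply Rmin_glb_lt|]; lra. }
  intros y Hy.
  assert (Hy1 : Rabs (y - r0) < d1). { eapply Rlt_le_trans; [exact Hy|]. eapply Rle_trans; apply Rmin_l. }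
  assert (Hy2 : Rabs (y - r0) < d2). { eapply Rlt_le_trans; [exact Hy|]. eapply Rle_trans; [apply Rmin_l|apply Rmin_r]. }
  assert (Hy3 : Rabs (y - r0) < - r0). { eapply Rlt_le_trans; [exact Hy|]. apply Rmin_r. }
  apply Rabs_lt_between' in Hy3.
  assert (Hyn : y < 0) by lra.
  specialize (H1 y Hy1). specialize (H2 y Hy2).
  apply Rabs_lt_between' in H1. apply Rabs_lt_between' in H2.
  pose proof (thc_spec y Hyn).
  apply Rabs_lt_between'. split.
  - destruct (Rle_lt_dec (thc y) (t0 - eps)) as [Hle|]; [|fold t0; lra].
    destruct (Req_dec (thc y) (t0 - eps)) as [Heq|Hne].
    + rewrite Heq in H. lra.
    + pose proof (E_incr y (thc y) (t0 - eps) Hyn ltac:(lra)). lra.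
  - destruct (Rle_lt_dec (t0 + eps) (thc y)) as [Hle|]; [|fold t0; lra].
    destruct (Req_dec (thc y) (t0 + eps)) as [Heq|Hne].
    + rewrite Heq in H. lra.
    + pose proof (E_incr y (t0 + eps) (thc y) Hyn ltac:(lra)). lra.
Qed.

Lemma PI_gt3 : 3 < PI.
Proof. pose proof PI2_3_2. lra. Qed.

Lemma At_circle th : -3*PI/2 < th < PI/2 -> At 0 th = PI/4 + th/2.
Proof.
  intros Hth. unfold At, Xf, Yf. rewrite exp_0, !Rmult_1_l.
  set (u := PI/4 + th/2).
  assert (Hu : -(PI/2) < u < PI/2) by (unfold u; lra).
  assert (Hc : 0 < cos u) by (apply cos_gt_0; lra).
  assert (Ht : th = 2 * u - PI/2) by (unfold u; lra).
  rewrite Ht, cos_minus, sin_minus, cos_PI2, sin_PI2, sin_2a, cos_2a_cos.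
  match goal with |- atan ?a = _ => replace a with (tan u) end.
  - rewrite atan_tan; lra.
  - unfold tan. field_simplify_eq; [ring|split; nra].
Qed.

Lemma E_circle th : -3*PI/2 < th < PI/2 -> E 0 th = 0.
Proof. intros H. unfold E. rewrite At_circle; auto. lra. Qed.

Lemma exp2 r : exp r ^ 2 = exp (2 * r).
Proof. replace (2 * r) with (r + r) by ring. rewrite exp_plus. ring. Qed.

Lemma Erh_pos r : r < 0 -> 0 < Erh r (thc r).
Proof.
  intros Hr. set (th := thc r).
  pose proof (thc_spec r Hr) as HE. fold th in HE.
  pose proof (thc_bounds r Hr) as Hb. fold th in Hb.
  pose proof (Dd_pos r th (Y_lt1 r th Hr)) as HD.
  pose proof (XY2 r th) as HXY.
  pose proof (exp_pos r) as Hep.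
  pose proof (exp_increasing r 0 Hr) as He1. rewrite exp_0 in He1.
  destruct (Rlt_le_dec 0 (Erh r th)) as [Hpos|Hneg]; [exact Hpos|exfalso].
  unfold Erh in Hneg.
  assert (Hq : Dd r th <= 2 * Xf r th).
  { assert (2 * Xf r th / Dd r th >= 1) by lra.
    apply Rge_le in H. apply (Rmult_le_compat_r (Dd r th)) in H; [|lra].
    field_simplify in H; lra. }
  unfold Dd in HD, Hq.
  set (X := Xf r th) in *. set (Y := Yf r th) in *.
  assert (HX : 0 < X) by nra.
  assert (Hsq : X^2 + Y^2 < 1) by (rewrite HXY; nra).
  assert (HY : 0 < Y).
  { destruct (Rle_lt_dec Y 0); [|auto]. exfalso.
    assert (X^2+Y^2+1 <= 2*X) by nra. assert (X < 1) by nra. nra. }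
  assert (Hr2 : -2 < r).
  { destruct (Rle_lt_dec r (-2)) as [Hle|]; [|auto]. exfalso.
    assert (1/2 <= X + Y) by nra.
    assert ((X+Y)^2 >= 1/4) by nra.
    assert (HS : 1/8 <= X^2 + Y^2) by (pose proof (pow2_ge_0 (X - Y)); nra).
    rewrite HXY, exp2 in HS.
    assert (exp (2*r) <= exp (-4)).
    { destruct (Req_dec r (-2)). subst. replace (2 * -2) with (-4) by ring. lra.
      left. apply exp_increasing. lra. }
    pose proof (exp_ineq1 2 ltac:(lra)).
    assert (exp 4 = exp 2 * exp 2) by (rewrite <- exp_plus; f_equal; ring).
    assert (exp (-4) * exp 4 = 1) by (rewrite <- exp_plus; replace (-4+4) with 0 by ring; apply exp_0).
    pose proof (exp_pos (-4)). nra. }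
  assert (Hc : 0 < cos th) by (unfold X, Xf in HX; nra).
  assert (Hs : 0 < sin th) by (unfold Y, Yf in HY; nra).
  pose proof PI_gt3. pose proof PI_4.
  assert (Hth : 0 < th < PI/2).
  { split.
    - destruct (Rlt_le_dec 0 th) as [|Hle]; [auto|exfalso].
      destruct (Rlt_le_dec (-PI) th).
      + destruct (Req_dec th 0) as [Hz|Hz].
        * rewrite Hz, sin_0 in Hs. lra.
        * pose proof (sin_lt_0_var th ltac:(lra) ltac:(lra)). lra.
      + pose proof (cos_lt_0 (th + 2*PI) ltac:(lra) ltac:(lra)).
        replace (th + 2*PI) with (th + 2 * INR 1 * PI) in H1 by (simpl; ring).
        rewrite cos_period in H1. lra.
    - destruct (Rlt_le_dec th (PI/2)) as [|Hle]; [auto|exfalso].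
      destruct (Rle_lt_dec th (3*(PI/2))) as [Hle2|Hlt2].
      + pose proof (cos_le_0 th Hle Hle2). lra.
      + pose proof (sin_lt_0 th ltac:(lra) ltac:(lra)). lra. }
  assert (Hs1 : sin th < 1) by (pose proof (sin2_cos2 th); unfold Rsqr in *; nra).
  assert (Hm : 1 < sin th + cos th) by (pose proof (sin2_cos2 th); unfold Rsqr in *; nra).
  destruct (mvt (fun u => E u th) (fun u => Erh u th) r 0 Hr) as [xi [Hxi Hmv]].
  { intros c Hcc. apply E_drh. unfold Yf. pose proof (exp_pos c).
    assert (exp c <= 1) by (destruct (Req_dec c 0); [subst; rewrite exp_0; lra|left; rewrite <- exp_0; apply exp_increasing; lra]).
    nra. }
  rewrite E_circle in Hmv by lra. rewrite HE in Hmv.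
  assert (Hz : Erh xi th = 0) by nra.
  unfold Erh in Hz.
  assert (HYx : Yf xi th < 1) by (apply Y_lt1; lra).
  pose proof (Dd_pos xi th HYx) as HDx.
  assert (Hqx : Dd xi th = 2 * Xf xi th).
  { assert (Hh : 2 * Xf xi th / Dd xi th = 1) by lra.
    unfold Rdiv in Hh. apply (f_equal (fun z => z * Dd xi th)) in Hh.
    rewrite Rmult_assoc, Rinv_l in Hh; lra. }
  unfold Dd, Xf, Yf, X, Y in *. unfold Xf, Yf in Hq, HX, HY, HXY, Hsq, Hneg.
  set (l := exp xi) in *. set (mu := exp r) in *.
  assert (Hl : mu < l < 1).
  { split; [apply exp_increasing; lra|]. rewrite <- exp_0. apply exp_increasing; lra. }
  pose proof (sin2_cos2 th) as Hsc. unfold Rsqr in *.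
  set (c := cos th) in *. set (s := sin th) in *.
  assert (Hm2 : mu^2 * (s*s + c*c) = mu^2) by (rewrite Hsc; ring).
  assert (Hl2 : l^2 * (s*s + c*c) = l^2) by (rewrite Hsc; ring).
  assert (Hqmu : mu^2 - 2*mu*(s+c) + 1 <= 0) by nra.
  assert (Hql : l^2 - 2*l*(s+c) + 1 = 0) by nra.
  assert (0 < (l - mu) * (1 - l)) by nra.
  nra.
Qed.

Section CU.
Context {U : UniformSpace}.

Lemma c_plus (f g : U -> R) x : continuous f x -> continuous g x -> continuous (fun y => f y + g y) x.
Proof. intros. apply (@continuous_plus U R_AbsRing R_NormedModule); auto. Qed.
Lemma c_opp (f : U -> R) x : continuous f x -> continuous (fun y => - f y) x.
Proof. intros. apply (@continuous_opp U R_AbsRing R_NormedModule); auto. Qed.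
Lemma c_minus (f g : U -> R) x : continuous f x -> continuous g x -> continuous (fun y => f y - g y) x.
Proof. intros. apply c_plus; auto. apply c_opp; auto. Qed.
Lemma c_mult (f g : U -> R) x : continuous f x -> continuous g x -> continuous (fun y => f y * g y) x.
Proof. intros. apply (@continuous_mult U R_AbsRing); auto. Qed.
Lemma c_const (c : R) x : continuous (fun _ : U => c) x.
Proof. apply continuous_const. Qed.
Lemma c_comp1 (f : U -> R) (g : R -> R) x : continuous f x -> continuous g (f x) -> continuous (fun y => g (f y)) x.
Proof. intros. apply (continuous_comp f g); auto. Qed.
Lemma c_inv (f : U -> R) x : continuous f x -> f x <> 0 -> continuous (fun y => / f y) x.
Proof. intros. apply (c_comp1 f Rinv); auto. apply continuous_Rinv. auto. Qed.
Lemma c_div (f g : U -> R) x : continuous f x -> continuous g x -> g x <> 0 -> continuous (fun y => f y / g y) x.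
Proof. intros. apply c_mult; auto. apply c_inv; auto. Qed.
Lemma c_pow2 (f : U -> R) x : continuous f x -> continuous (fun y => f y ^ 2) x.
Proof. intros. apply (continuous_ext (fun y => f y * f y)). { intros y. simpl. ring. } apply c_mult; auto. Qed.
End CU.

Lemma c_fst (a b : R) : continuous (fun p : R * R => fst p) (a, b).
Proof. apply continuous_fst. Qed.
Lemma c_snd (a b : R) : continuous (fun p : R * R => snd p) (a, b).
Proof. apply continuous_snd. Qed.

Lemma c_X a b : continuous (fun p : R * R => Xf (fst p) (snd p)) (a, b).
Proof.
  unfold Xf. apply c_mult.
  - apply (c_comp1 (fun p : R*R => fst p) exp); [apply c_fst|apply continuous_exp].
  - apply (c_comp1 (fun p : R*R => snd p) cos); [apply c_snd|apply continuous_cos].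
Qed.
Lemma c_Y a b : continuous (fun p : R * R => Yf (fst p) (snd p)) (a, b).
Proof.
  unfold Yf. apply c_mult.
  - apply (c_comp1 (fun p : R*R => fst p) exp); [apply c_fst|apply continuous_exp].
  - apply (c_comp1 (fun p : R*R => snd p) sin); [apply c_snd|apply continuous_sin].
Qed.
Lemma c_D a b : continuous (fun p : R * R => Dd (fst p) (snd p)) (a, b).
Proof.
  unfold Dd. apply c_plus; apply c_pow2; [apply c_X|]. apply c_minus; [apply c_Y|apply c_const].
Qed.

Lemma c_Erh a b : Yf a b < 1 -> continuous (fun p : R * R => Erh (fst p) (snd p)) (a, b).
Proof.
  intros H. unfold Erh. apply c_minus; [apply c_const|]. apply c_div.
  - apply c_mult; [apply c_const|apply c_X].
  - apply c_D.
  - simpl. pose proof (Dd_pos a b H). lra.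
Qed.

Lemma c_Eth a b : Yf a b < 1 -> continuous (fun p : R * R => Eth (fst p) (snd p)) (a, b).
Proof.
  intros H. unfold Eth. apply c_div.
  - apply c_minus; [apply c_const|]. apply c_pow2.
    apply (c_comp1 (fun p : R*R => fst p) exp); [apply c_fst|apply continuous_exp].
  - apply c_D.
  - simpl. pose proof (Dd_pos a b H). lra.
Qed.

Lemma c_Tf a b : Yf a b < 1 -> continuous (fun p : R * R => Tf (fst p) (snd p)) (a, b).
Proof.
  intros H. unfold Tf. apply c_minus; [|apply c_const]. apply c_plus.
  - apply c_div; [|apply c_const|simpl; lra]. apply c_minus; [apply c_snd|apply c_fst].
  - apply c_div; [|apply c_const|simpl; lra].
    apply (c_comp1 (fun p : R*R => Dd (fst p) (snd p)) ln); [apply c_D|].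
    apply continuous_ln. simpl. apply Dd_pos; auto.
Qed.

Lemma cont2_ed (F : R -> R -> R) a b :
  continuous (fun p : R * R => F (fst p) (snd p)) (a, b) ->
  forall eps, 0 < eps -> exists d, 0 < d /\ forall x y, Rabs (x - a) < d -> Rabs (y - b) < d ->
     Rabs (F x y - F a b) < eps.
Proof.
  intros H eps He.
  apply filterlim_locally with (eps := mkposreal eps He) in H.
  destruct H as [d Hd]. exists d. split; [apply cond_pos|].
  intros x y Hx Hy. apply (Hd (x, y)). split; simpl; auto.
Qed.

Lemma mvt_gen (f f' : R -> R) a b :
  (forall c, Rabs (c - a) <= Rabs (b - a) -> is_derive f c (f' c)) ->
  exists c, Rabs (c - a) <= Rabs (b - a) /\ f b - f a = f' c * (b - a).
Proof.
  intros Hd. destruct (Rtotal_order a b) as [H|[H|H]].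
  - destruct (mvt f f' a b H) as [c [Hc Hm]].
    + intros c Hc. apply Hd. rewrite !Rabs_right by lra. lra.
    + exists c. split; auto. rewrite !Rabs_right by lra. lra.
  - subst. exists b. split; [lra|ring].
  - destruct (mvt f f' b a H) as [c [Hc Hm]].
    + intros c Hc. apply Hd. rewrite !Rabs_left1 by lra. lra.
    + exists c. split; [rewrite !Rabs_left1 by lra; lra|lra].
Qed.

Lemma quot_close a b a0 b0 eta : 0 < b0 -> 0 <= eta -> Rabs (a - a0) <= eta -> Rabs (b - b0) <= eta -> eta <= b0 / 2 ->
  Rabs (a / b - a0 / b0) <= 2 * eta * (b0 + Rabs a0) / (b0 * b0).
Proof.
  intros Hb0 He Ha Hb Heb.
  apply Rabs_le_between' in Hb. 
  assert (Hbp : b0 / 2 <= b) by lra.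
  replace (a / b - a0 / b0) with ((a - a0) * b0 / (b * b0) + a0 * (b0 - b) / (b * b0)) by (field; lra).
  eapply Rle_trans; [apply Rabs_triang|].
  unfold Rdiv. rewrite !Rabs_mult. rewrite Rabs_inv.
  rewrite (Rabs_right b0) by lra. rewrite (Rabs_right (b * b0)) by nra.
  assert (Hbb : Rabs (b0 - b) <= eta) by (apply Rabs_le_between'; lra).
  assert (H1 : Rabs (a - a0) * b0 / (b * b0) <= eta * b0 / (b0/2 * b0)).
  { unfold Rdiv. apply Rmult_le_compat; try nra.
    - pose proof (Rabs_pos (a - a0)). nra.
    - left. apply Rinv_pos. nra.
    - apply Rinv_le_contravar; nra. }
  assert (H2 : Rabs a0 * Rabs (b0 - b) / (b * b0) <= Rabs a0 * eta / (b0/2 * b0)).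
  { unfold Rdiv. apply Rmult_le_compat; try nra.
    - pose proof (Rabs_pos a0). pose proof (Rabs_pos (b0 - b)). nra.
    - left. apply Rinv_pos. nra.
    - apply Rmult_le_compat_l; [apply Rabs_pos|auto].
    - apply Rinv_le_contravar; nra. }
  eapply Rle_trans; [apply Rplus_le_compat; [exact H1|exact H2]|].
  right. field. lra.
Qed.

Lemma thc_deriv r : r < 0 -> derivable_pt_lim thc r (- Erh r (thc r) / Eth r (thc r)).
Proof.
  intros Hr eps He.
  set (t0 := thc r). set (a0 := - Erh r t0). set (b0 := Eth r t0).
  assert (Hb0 : 0 < b0) by (apply Eth_pos; auto).
  assert (HY0 : Yf r t0 < 1) by (apply Y_lt1; auto).
  set (K := b0 + Rabs a0).
  assert (HK : 0 < K) by (unfold K; pose proof (Rabs_pos a0); lra).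
  set (eta := Rmin (b0/2) (eps * (b0 * b0) / (4 * K))).
  assert (Heta : 0 < eta).
  { unfold eta. apply Rmin_pos; [lra|]. apply Rdiv_lt_0_compat; [apply Rmult_lt_0_compat; [lra|nra]|lra]. }
  assert (Heta1 : eta <= b0 / 2) by apply Rmin_l.
  assert (Heta2 : eta <= eps * (b0 * b0) / (4 * K)) by apply Rmin_r.
  destruct (cont2_ed Erh r t0 (c_Erh r t0 HY0) eta Heta) as [d1 [Hd1 H1]].
  destruct (cont2_ed Eth r t0 (c_Eth r t0 HY0) eta Heta) as [d2 [Hd2 H2]].
  destruct (cont_ed thc r (thc_cont r Hr) (Rmin d1 d2) (Rmin_pos _ _ Hd1 Hd2)) as [d3 [Hd3 H3]].
  assert (Hdp : 0 < Rmin (Rmin d1 d3) (- r)) by (apply Rmin_pos; [apply Rmin_pos|]; lra).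
  exists (mkposreal _ Hdp). intros h Hh0 Hh. simpl in Hh.
  assert (Hh1 : Rabs h < d1) by (eapply Rlt_le_trans; [exact Hh|]; eapply Rle_trans; apply Rmin_l).
  assert (Hh3 : Rabs h < d3) by (eapply Rlt_le_trans; [exact Hh|]; eapply Rle_trans; [apply Rmin_l|apply Rmin_r]).
  assert (Hhr : Rabs h < - r) by (eapply Rlt_le_trans; [exact Hh|]; apply Rmin_r).
  assert (Hrh : r + h < 0) by (pose proof (Rle_abs h); lra).
  set (t1 := thc (r + h)).
  assert (HD : Rabs (t1 - t0) < Rmin d1 d2) by (unfold t1, t0; apply H3; replace (r + h - r) with h by ring; auto).
  assert (HDd1 : Rabs (t1 - t0) < d1) by (eapply Rlt_le_trans; [exact HD|apply Rmin_l]).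
  assert (HDd2 : Rabs (t1 - t0) < d2) by (eapply Rlt_le_trans; [exact HD|apply Rmin_r]).
  destruct (mvt_gen (fun u => E u t1) (fun u => Erh u t1) r (r + h)) as [x1 [Hx1 Hm1]].
  { intros c Hc. apply E_drh. apply Y_lt1. replace (r + h - r) with h in Hc by ring.
    pose proof (Rle_abs (c - r)). lra. }
  destruct (mvt_gen (fun u => E r u) (fun u => Eth r u) t0 t1) as [x2 [Hx2 Hm2]].
  { intros c Hc. apply E_dth. apply Y_lt1. auto. }
  simpl in Hm1, Hm2.
  replace (r + h - r) with h in Hm1, Hx1 by ring.
  assert (Et1 : E (r + h) t1 = 0) by (unfold t1; apply thc_spec; auto).
  rewrite Et1 in Hm1.
  assert (Et0 : E r t0 = 0) by apply (thc_spec r Hr).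
  rewrite Et0 in Hm2.
  assert (Hb : 0 < Eth r x2) by (apply Eth_pos; auto).
  assert (Hq : (thc (r + h) - thc r) / h = (- Erh x1 t1) / Eth r x2).
  { fold t1 t0. field_simplify_eq; [nra|lra..]. }
  fold t1 t0. replace ((t1 - t0) / h) with (- Erh x1 t1 / Eth r x2) by (rewrite <- Hq; reflexivity).
  assert (Ha : Rabs (- Erh x1 t1 - a0) <= eta).
  { unfold a0. replace (- Erh x1 t1 - - Erh r t0) with (- (Erh x1 t1 - Erh r t0)) by ring.
    rewrite Rabs_Ropp. left. apply H1; lra. }
  assert (Hb2 : Rabs (Eth r x2 - b0) <= eta).
  { unfold b0. left. apply H2.
    - rewrite Rminus_eq_0, Rabs_R0. lra.
    - lra. }
  pose proof (quot_close _ _ _ _ _ Hb0 (Rlt_le _ _ Heta) Ha Hb2 Heta1) as Hqc.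
  fold t0 a0 b0.
  eapply Rle_lt_trans; [exact Hqc|].
  fold K. apply (Rmult_le_compat_r (4 * K)) in Heta2; [|lra].
  replace (eps * (b0 * b0) / (4 * K) * (4 * K)) with (eps * (b0 * b0)) in Heta2 by (field; lra).
  apply (Rmult_lt_reg_r (b0 * b0)); [nra|].
  replace (2 * eta * K / (b0 * b0) * (b0 * b0)) with (2 * eta * K) by (field; lra).
  nra.
Qed.

Lemma chain_thc (F Fr Ft : R -> R -> R) r : r < 0 ->
  (forall a b, a < 0 -> is_derive (fun u => F u b) a (Fr a b)) ->
  (forall a b, a < 0 -> is_derive (fun u => F a u) b (Ft a b)) ->
  continuous (fun p : R * R => Fr (fst p) (snd p)) (r, thc r) ->
  continuous (fun p : R * R => Ft (fst p) (snd p)) (r, thc r) ->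
  derivable_pt_lim (fun u => F u (thc u)) r
    (Fr r (thc r) + Ft r (thc r) * (- Erh r (thc r) / Eth r (thc r))).
Proof.
  intros Hr HFr HFt Cr Ct eps He.
  set (t0 := thc r). set (L := - Erh r t0 / Eth r t0).
  set (M := 2 + Rabs (Ft r t0) + Rabs L).
  assert (HM : 0 < M) by (unfold M; pose proof (Rabs_pos (Ft r t0)); pose proof (Rabs_pos L); lra).
  set (eta := Rmin 1 (eps / (2 * M))).
  assert (Heta : 0 < eta) by (unfold eta; apply Rmin_pos; [lra|apply Rdiv_lt_0_compat; lra]).
  assert (Heta1 : eta <= 1) by apply Rmin_l.
  assert (Heta2 : eta <= eps / (2 * M)) by apply Rmin_r.
  destruct (cont2_ed Fr r t0 Cr eta Heta) as [d1 [Hd1 H1]].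
  destruct (cont2_ed Ft r t0 Ct eta Heta) as [d2 [Hd2 H2]].
  destruct (cont_ed thc r (thc_cont r Hr) (Rmin d1 d2) (Rmin_pos _ _ Hd1 Hd2)) as [d3 [Hd3 H3]].
  destruct (thc_deriv r Hr eta Heta) as [d4 H4].
  assert (Hdp : 0 < Rmin (Rmin d1 d3) (Rmin (- r) d4)).
  { apply Rmin_pos; apply Rmin_pos; try lra. apply cond_pos. }
  exists (mkposreal _ Hdp). intros h Hh0 Hh. simpl in Hh.
  assert (Hh1 : Rabs h < d1) by (eapply Rlt_le_trans; [exact Hh|]; eapply Rle_trans; apply Rmin_l).
  assert (Hh3 : Rabs h < d3) by (eapply Rlt_le_trans; [exact Hh|]; eapply Rle_trans; [apply Rmin_l|apply Rmin_r]).
  assert (Hhr : Rabs h < - r) by (eapply Rlt_le_trans; [exact Hh|]; eapply Rle_trans; [apply Rmin_r|apply Rmin_l]).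
  assert (Hh4 : Rabs h < d4) by (eapply Rlt_le_trans; [exact Hh|]; eapply Rle_trans; [apply Rmin_r|apply Rmin_r]).
  assert (Hrh : r + h < 0) by (pose proof (Rle_abs h); lra).
  specialize (H4 h Hh0 Hh4). fold t0 L in H4.
  set (t1 := thc (r + h)) in *.
  assert (HD : Rabs (t1 - t0) < Rmin d1 d2) by (unfold t1, t0; apply H3; replace (r + h - r) with h by ring; auto).
  assert (HDd1 : Rabs (t1 - t0) < d1) by (eapply Rlt_le_trans; [exact HD|apply Rmin_l]).
  assert (HDd2 : Rabs (t1 - t0) < d2) by (eapply Rlt_le_trans; [exact HD|apply Rmin_r]).
  destruct (mvt_gen (fun u => F u t1) (fun u => Fr u t1) r (r + h)) as [x1 [Hx1 Hm1]].
  { intros c Hc. apply HFr. replace (r + h - r) with h in Hc by ring.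
    pose proof (Rle_abs (c - r)). lra. }
  destruct (mvt_gen (fun u => F r u) (fun u => Ft r u) t0 t1) as [x2 [Hx2 Hm2]].
  { intros c Hc. apply HFt. auto. }
  simpl in Hm1, Hm2.
  replace (r + h - r) with h in Hm1, Hx1 by ring.
  fold t0.
  assert (Hq : (F (r + h) t1 - F r t0) / h = Fr x1 t1 + Ft r x2 * ((t1 - t0) / h)).
  { field_simplify_eq; [|lra]. nra. }
  rewrite Hq.
  assert (A1 : Rabs (Fr x1 t1 - Fr r t0) < eta) by (apply H1; lra).
  assert (A2 : Rabs (Ft r x2 - Ft r t0) < eta) by (apply H2; [rewrite Rminus_eq_0, Rabs_R0; lra|lra]).
  replace (Fr x1 t1 + Ft r x2 * ((t1 - t0) / h) - (Fr r t0 + Ft r t0 * L))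
    with ((Fr x1 t1 - Fr r t0) + Ft r x2 * ((t1 - t0) / h - L) + (Ft r x2 - Ft r t0) * L) by ring.
  assert (A3 : Rabs (Ft r x2) <= Rabs (Ft r t0) + 1).
  { replace (Ft r x2) with ((Ft r x2 - Ft r t0) + Ft r t0) by ring.
    eapply Rle_trans; [apply Rabs_triang|]. lra. }
  eapply Rle_lt_trans; [apply Rabs_triang|].
  eapply Rle_lt_trans; [apply Rplus_le_compat_l; rewrite Rabs_mult; apply Rle_refl|].
  eapply Rle_lt_trans; [apply Rplus_le_compat_r; apply Rabs_triang|].
  rewrite Rabs_mult.
  assert (B2 : Rabs (Ft r x2) * Rabs ((t1 - t0) / h - L) <= (Rabs (Ft r t0) + 1) * eta).
  { apply Rmult_le_compat; try apply Rabs_pos; lra. }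
  assert (B3 : Rabs (Ft r x2 - Ft r t0) * Rabs L <= eta * Rabs L).
  { apply Rmult_le_compat_r; [apply Rabs_pos|lra]. }
  assert (Hfin : eta * M < eps).
  { apply (Rmult_le_compat_r M) in Heta2; [|lra].
    replace (eps / (2 * M) * M) with (eps / 2) in Heta2 by (field; lra). lra. }
  unfold M in Hfin. pose proof (Rabs_pos L). pose proof (Rabs_pos (Ft r t0)). nra.
Qed.

Definition Tfun r := Tf r (thc r).
Definition Td r := - Eth r (thc r) / 2 + Erh r (thc r) / 2 * (- Erh r (thc r) / Eth r (thc r)).
Definition thd r := - Erh r (thc r) / Eth r (thc r).

Lemma Tfun_deriv r : r < 0 -> derivable_pt_lim Tfun r (Td r).
Proof.
  intros Hr. unfold Tfun, Td.
  apply (chain_thc Tf (fun a b => - Eth a b / 2) (fun a b => Erh a b / 2) r Hr).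
  - intros a b Ha. apply T_drh, Y_lt1, Ha.
  - intros a b Ha. apply T_dth, Y_lt1, Ha.
  - apply c_div; [apply c_opp, c_Eth, Y_lt1, Hr|apply c_const|simpl; lra].
  - apply c_div; [apply c_Erh, Y_lt1, Hr|apply c_const|simpl; lra].
Qed.

Lemma Td_neg r : r < 0 -> Td r < 0.
Proof.
  intros Hr. unfold Td. pose proof (Eth_pos r (thc r) Hr). pose proof (Erh_pos r Hr).
  set (a := Eth r (thc r)) in *. set (b := Erh r (thc r)) in *.
  replace (- a / 2 + b / 2 * (- b / a)) with (- (a * a + b * b) / (2 * a)) by (field; lra).
  apply Ropp_lt_cancel. rewrite Ropp_0. unfold Rdiv. rewrite <- Ropp_mult_distr_l, Ropp_involutive.
  apply Rmult_lt_0_compat; [nra|]. apply Rinv_0_lt_compat. lra.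
Qed.

Lemma thd_neg r : r < 0 -> thd r < 0.
Proof.
  intros Hr. unfold thd. pose proof (Eth_pos r (thc r) Hr). pose proof (Erh_pos r Hr).
  unfold Rdiv. rewrite <- Ropp_mult_distr_l. apply Ropp_lt_cancel. rewrite Ropp_0, Ropp_involutive.
  apply Rmult_lt_0_compat; auto. apply Rinv_0_lt_compat; auto.
Qed.

Lemma decr_deriv (f f' : R -> R) a b :
  (forall c, a <= c <= b -> derivable_pt_lim f c (f' c)) ->
  (forall c, a < c < b -> f' c < 0) -> a < b -> f b < f a.
Proof.
  intros Hd Hn Hab. destruct (MVT_cor2 f f' a b Hab Hd) as [c [Hm Hc]].
  specialize (Hn c Hc). nra.
Qed.

Lemma Tfun_decr a b : a < b -> b < 0 -> Tfun b < Tfun a.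
Proof.
  intros Hab Hb. apply (decr_deriv Tfun Td a b); auto.
  - intros c Hc. apply Tfun_deriv. lra.
  - intros c Hc. apply Td_neg. lra.
Qed.

Lemma thc_decr a b : a < b -> b < 0 -> thc b < thc a.
Proof.
  intros Hab Hb. apply (decr_deriv thc thd a b); auto.
  - intros c Hc. apply thc_deriv. lra.
  - intros c Hc. apply thd_neg. lra.
Qed.

Lemma Tfun_cont r : r < 0 -> continuity_pt Tfun r.
Proof. intros Hr. apply derivable_continuous_pt. exists (Td r). apply Tfun_deriv, Hr. Qed.

Lemma ln_le_2ln2 x : 0 < x -> x <= 4 -> ln x <= 2 * ln 2.
Proof.
  intros H1 H2. replace (2 * ln 2) with (ln 4).
  - destruct (Req_dec x 4); [subst; lra|]. left. apply ln_increasing; lra.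
  - replace 4 with (2 * 2) by ring. rewrite ln_mult by lra. ring.
Qed.

Lemma Tfun_upper r : r < 0 -> Tfun r <= - r + PI / 4 + ln 2 / 2.
Proof.
  intros Hr. unfold Tfun, Tf. pose proof (thc_bounds r Hr).
  pose proof (Dd_pos r (thc r) (Y_lt1 r _ Hr)).
  assert (Dd r (thc r) <= 4).
  { unfold Dd. pose proof (XY2 r (thc r)). pose proof (exp_increasing r 0 Hr). rewrite exp_0 in H2.
    pose proof (exp_pos r). unfold Yf in *. pose proof (SIN_bound (thc r)). nra. }
  pose proof (ln_le_2ln2 _ H0 H1). lra.
Qed.

Lemma Tfun_lower r : r <= -1 -> - r - 3 * PI / 4 - 3 * ln 2 / 2 <= Tfun r.
Proof.
  intros Hr. unfold Tfun, Tf. pose proof (thc_bounds r ltac:(lra)).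
  assert (Hq : 1/4 <= Dd r (thc r)).
  { unfold Dd. pose proof (XY2 r (thc r)).
    assert (exp r < 1/2).
    { pose proof (exp_ineq1 1 ltac:(lra)).
      assert (exp r <= exp (-1)) by (destruct (Req_dec r (-1)); [subst; lra|left; apply exp_increasing; lra]).
      assert (exp (-1) * exp 1 = 1) by (rewrite <- exp_plus; replace (-1+1) with 0 by ring; apply exp_0).
      pose proof (exp_pos (-1)). nra. }
    pose proof (exp_pos r). unfold Yf in *. pose proof (SIN_bound (thc r)). nra. }
  assert (ln (1/4) = - (2 * ln 2)).
  { replace (1/4) with (/ (2 * 2)) by field. rewrite ln_Rinv by lra. rewrite ln_mult by lra. ring. }
  assert (ln (1/4) <= ln (Dd r (thc r))).
  { destruct (Req_dec (Dd r (thc r)) (1/4)) as [E'|E']; [rewrite E'; lra|left; apply ln_increasing; lra]. }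
  lra.
Qed.

Lemma Dd_formula u th : Dd u th = exp u ^ 2 - 2 * exp u * sin th + 1.
Proof.
  unfold Dd, Xf, Yf. pose proof (sin2_cos2 th) as H. unfold Rsqr in H.
  replace ((exp u * cos th) ^ 2 + (exp u * sin th - 1) ^ 2) with
    (exp u ^ 2 * (sin th * sin th + cos th * cos th) - 2 * exp u * sin th + 1) by ring.
  rewrite H. ring.
Qed.

Lemma exp_le1 u : u <= 0 -> exp u <= 1.
Proof. intros H. destruct (Req_dec u 0); [subst; rewrite exp_0; lra|left; rewrite <- exp_0; apply exp_increasing; lra]. Qed.

Lemma thc_lim0 eps : 0 < eps < PI/4 -> exists d, 0 < d /\ forall r, -d < r < 0 -> Rabs (thc r) < eps.
Proof.
  intros He. pose proof PI_gt3 as HPI.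
  assert (Hs : 0 < sin eps) by (apply sin_gt_0; lra).
  assert (Hc : 0 < cos eps) by (apply cos_gt_0; lra).
  pose proof (sin2_cos2 eps) as Hsc. unfold Rsqr in Hsc.
  set (m := sin eps + cos eps).
  assert (Hm : 1 < m) by (unfold m; nra).
  exists (ln m). split; [rewrite <- ln_1; apply ln_increasing; lra|].
  intros r Hr.
  pose proof (thc_spec r (proj2 Hr)) as HE.
  replace (thc r) with (thc r - 0) by ring.
  apply Rabs_lt_between'. rewrite ?Rminus_0_r, ?Rplus_0_l. split.
  -
    destruct (Rle_lt_dec (thc r) (-eps)) as [Hle|]; [exfalso|lra].
    destruct (mvt (fun u => E u (- eps)) (fun u => Erh u (- eps)) r 0 (proj2 Hr)) as [x [Hx Hmv]].
    { intros c Hcc. apply E_drh. unfold Yf. rewrite sin_neg. pose proof (exp_pos c). nra. }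
    simpl in Hmv. rewrite E_circle in Hmv by lra.
    assert (Hpos : 0 < Erh x (- eps)).
    { assert (HY : Yf x (-eps) < 1) by (unfold Yf; rewrite sin_neg; pose proof (exp_pos x); nra).
      pose proof (Dd_pos _ _ HY) as HD.
      unfold Erh. rewrite Dd_formula in *. unfold Xf. rewrite sin_neg, cos_neg in *.
      pose proof (exp_pos x). pose proof (exp_le1 x ltac:(lra)).
      assert (Hcl : cos eps <= 1) by (pose proof (COS_bound eps); lra).
      assert (2 * (exp x * cos eps) / (exp x ^ 2 - 2 * exp x * - sin eps + 1) < 1); [|lra].
      apply (Rmult_lt_reg_r (exp x ^ 2 - 2 * exp x * - sin eps + 1)); [lra|].
      unfold Rdiv. rewrite Rmult_assoc, Rinv_l by lra. nra. }
    assert (E r (- eps) < 0) by nra.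
    destruct (Req_dec (thc r) (-eps)) as [Heq|Hne].
    + rewrite Heq in HE. lra.
    + pose proof (E_incr r (thc r) (-eps) (proj2 Hr) ltac:(lra)). lra.
  - destruct (Rle_lt_dec eps (thc r)) as [Hle|]; [exfalso|lra].
    destruct (mvt (fun u => E u eps) (fun u => Erh u eps) r 0 (proj2 Hr)) as [x [Hx Hmv]].
    { intros c Hcc. apply E_drh. unfold Yf. pose proof (exp_pos c). pose proof (exp_le1 c ltac:(lra)).
      assert (sin eps < 1) by nra. nra. }
    simpl in Hmv. rewrite E_circle in Hmv by lra.
    assert (Hlam : 1 < exp x * m).
    { assert (Hq : exp (- ln m) < exp x) by (apply exp_increasing; lra).
      rewrite exp_Ropp, exp_ln in Hq by lra.
      apply (Rmult_lt_compat_r m) in Hq; [|lra]. rewrite Rinv_l in Hq by lra. lra. }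
    assert (Hneg : Erh x eps < 0).
    { assert (HY : Yf x eps < 1) by (apply Y_lt1; lra).
      pose proof (Dd_pos _ _ HY) as HD.
      unfold Erh. rewrite Dd_formula in *. unfold Xf.
      pose proof (exp_pos x).
      assert (exp x < 1) by (rewrite <- exp_0; apply exp_increasing; lra).
      assert (1 < 2 * (exp x * cos eps) / (exp x ^ 2 - 2 * exp x * sin eps + 1)); [|lra].
      apply (Rmult_lt_reg_r (exp x ^ 2 - 2 * exp x * sin eps + 1)); [lra|].
      unfold Rdiv. rewrite (Rmult_assoc (2 * (exp x * cos eps))), Rinv_l by lra. unfold m in Hlam. nra. }
    assert (0 < E r eps) by nra.
    destruct (Req_dec (thc r) eps) as [Heq|Hne].
    + rewrite Heq in HE. lra.
    + pose proof (E_incr r eps (thc r) (proj2 Hr) ltac:(lra)). lra.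
Qed.

Lemma Tf00 : Tf 0 0 = 0.
Proof.
  unfold Tf, Dd, Xf, Yf. rewrite exp_0, cos_0, sin_0.
  replace ((1 * 1) ^ 2 + (1 * 0 - 1) ^ 2) with 2 by ring. field.
Qed.

Lemma Tfun_lim0 eps : 0 < eps -> exists d, 0 < d /\ forall r, -d < r < 0 -> Rabs (Tfun r) < eps.
Proof.
  intros He.
  assert (HY : Yf 0 0 < 1) by (unfold Yf; rewrite sin_0; lra).
  destruct (cont2_ed Tf 0 0 (c_Tf 0 0 HY) eps He) as [d1 [Hd1 H1]].
  pose proof PI_gt3.
  destruct (thc_lim0 (Rmin d1 (PI/8))) as [d2 [Hd2 H2]].
  { split; [apply Rmin_pos; lra|]. eapply Rle_lt_trans; [apply Rmin_r|lra]. }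
  exists (Rmin d1 d2). split; [apply Rmin_pos; lra|].
  intros r Hr. rewrite Tf00 in H1. unfold Tfun.
  rewrite <- (Rminus_0_r (Tf r (thc r))). apply H1.
  - rewrite Rminus_0_r. assert (Rmin d1 d2 <= d1) by apply Rmin_l. rewrite Rabs_left; lra.
  - rewrite Rminus_0_r. eapply Rlt_le_trans; [apply H2|apply Rmin_l].
    assert (Rmin d1 d2 <= d2) by apply Rmin_r. lra.
Qed.

Lemma Tfun_pos r : r < 0 -> 0 < Tfun r.
Proof.
  assert (Hnn : forall u, u < 0 -> 0 <= Tfun u).
  { intros u Hu. destruct (Rle_lt_dec 0 (Tfun u)) as [|Hn]; [auto|exfalso].
    destruct (Tfun_lim0 (- Tfun u) ltac:(lra)) as [d [Hd H]].
    set (s := Rmax (u/2) (-d/2)).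
    assert (Hs1 : u < s) by (unfold s; eapply Rlt_le_trans; [|apply Rmax_l]; lra).
    assert (Hs2 : -d < s) by (unfold s; eapply Rlt_le_trans; [|apply Rmax_r]; lra).
    assert (Hs3 : s < 0) by (unfold s; apply Rmax_lub_lt; lra).
    specialize (H s (conj Hs2 Hs3)). pose proof (Tfun_decr u s Hs1 Hs3).
    rewrite Rabs_left in H; lra. }
  intros Hr. pose proof (Hnn (r/2) ltac:(lra)). pose proof (Tfun_decr r (r/2) ltac:(lra) ltac:(lra)). lra.
Qed.

Lemma rinv_ex t : 0 < t -> exists r, r < 0 /\ Tfun r = t.
Proof.
  intros Ht.
  set (C := 3 * PI / 4 + 3 * ln 2 / 2).
  assert (Hl2 : 0 < ln 2) by (rewrite <- ln_1; apply ln_increasing; lra).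
  assert (HC : 0 < C) by (unfold C; pose proof PI_gt3; lra).
  set (a := - (t + C + 2)).
  assert (Ha : t < Tfun a) by (pose proof (Tfun_lower a ltac:(unfold a; lra)); unfold a, C in *; lra).
  destruct (Tfun_lim0 t Ht) as [d [Hd Hlim]].
  set (b := - Rmin d 1 / 2).
  assert (Hb1 : -d < b < 0) by (unfold b; pose proof (Rmin_l d 1); pose proof (Rmin_pos d 1 Hd ltac:(lra)); lra).
  assert (Hb2 : -1/2 <= b) by (unfold b; pose proof (Rmin_r d 1); lra).
  assert (Hbt : Tfun b < t) by (specialize (Hlim b Hb1); apply Rabs_def2 in Hlim; lra).
  assert (Hab : a < b) by (unfold a; lra).
  destruct (Ranalysis5.IVT_interv (fun u => t - Tfun u) a b) as [z [Hz1 Hz2]]; auto.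
  - intros u Hu. apply continuity_pt_minus; [apply continuity_pt_const; intros ??; auto|]. apply Tfun_cont. lra.
  - lra.
  - lra.
  - exists z. split; [lra|lra].
Qed.

Definition rinv t := match Rlt_dec 0 t with left H => proj1_sig (constructive_indefinite_description _ (rinv_ex t H)) | right _ => 0 end.

Lemma rinv_spec t : 0 < t -> rinv t < 0 /\ Tfun (rinv t) = t.
Proof.
  intros Ht. unfold rinv. destruct (Rlt_dec 0 t); [|lra]. exact (proj2_sig (constructive_indefinite_description _ (rinv_ex t r))).
Qed.

Lemma Tfun_inj a b : a < 0 -> b < 0 -> Tfun a = Tfun b -> a = b.
Proof.
  intros Ha Hb H. destruct (Rtotal_order a b) as [H1|[H1|H1]]; auto.
  - pose proof (Tfun_decr a b H1 Hb). lra.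
  - pose proof (Tfun_decr b a H1 Ha). lra.
Qed.

Lemma rinv_uniq t r : r < 0 -> Tfun r = t -> rinv t = r.
Proof.
  intros Hr Ht. pose proof (Tfun_pos r Hr). subst t.
  destruct (rinv_spec (Tfun r) H). apply Tfun_inj; auto.
Qed.

Lemma Tfun_le a b : a <= b -> b < 0 -> Tfun b <= Tfun a.
Proof. intros H Hb. destruct (Req_dec a b); [subst; lra|left; apply Tfun_decr; lra]. Qed.

Lemma rinv_decr s t : 0 < s -> s < t -> rinv t < rinv s.
Proof.
  intros Hs Hst. destruct (rinv_spec s Hs) as [H1 H2]. destruct (rinv_spec t ltac:(lra)) as [H3 H4].
  destruct (Rlt_le_dec (rinv t) (rinv s)) as [|Hle]; auto.
  pose proof (Tfun_le _ _ Hle H3). lra.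
Qed.

Lemma rinv_cont t0 : 0 < t0 -> continuous rinv t0.
Proof.
  intros Ht0. apply ed_cont. intros eps He.
  destruct (rinv_spec t0 Ht0) as [Hr0 HT0]. set (r0 := rinv t0) in *.
  set (e := Rmin eps (- r0 / 2)).
  assert (He1 : 0 < e) by (unfold e; apply Rmin_pos; lra).
  assert (He2 : e <= eps) by apply Rmin_l.
  assert (He3 : e <= - r0 / 2) by apply Rmin_r.
  pose proof (Tfun_decr (r0 - e) r0 ltac:(lra) Hr0) as Hm.
  pose proof (Tfun_decr r0 (r0 + e) ltac:(lra) ltac:(lra)) as Hp.
  pose proof (Tfun_pos (r0 + e) ltac:(lra)) as Hpos.
  exists (Rmin (Tfun (r0 - e) - t0) (t0 - Tfun (r0 + e))). split; [apply Rmin_pos; lra|].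
  intros t Ht. pose proof (Rmin_l (Tfun (r0 - e) - t0) (t0 - Tfun (r0 + e))).
  pose proof (Rmin_r (Tfun (r0 - e) - t0) (t0 - Tfun (r0 + e))).
  apply Rabs_def2 in Ht. destruct Ht as [Ht1 Ht2].
  assert (Htp : 0 < t) by lra.
  destruct (rinv_spec t Htp) as [Hr HT].
  apply Rabs_def1.
  - destruct (Rlt_le_dec (rinv t) (r0 + e)) as [|Hle]; [lra|].
    pose proof (Tfun_le _ _ Hle Hr). lra.
  - destruct (Rlt_le_dec (r0 - e) (rinv t)) as [|Hle]; [lra|].
    pose proof (Tfun_le _ _ Hle ltac:(lra)). lra.
Qed.

Lemma rinv_deriv t0 : 0 < t0 -> derivable_pt_lim rinv t0 (/ Td (rinv t0)).
Proof.
  intros Ht0 eps He.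
  destruct (rinv_spec t0 Ht0) as [Hr0 HT0]. set (r0 := rinv t0) in *.
  set (D0 := Td r0). assert (HD0 : D0 < 0) by (apply Td_neg; auto).
  set (eta := Rmin (- D0 / 2) (eps * (D0 * D0) / 4)).
  assert (Heta : 0 < eta) by (unfold eta; apply Rmin_pos; [lra|]; apply Rdiv_lt_0_compat; [apply Rmult_lt_0_compat; nra|lra]).
  assert (Heta1 : eta <= - D0 / 2) by apply Rmin_l.
  assert (Heta2 : eta <= eps * (D0 * D0) / 4) by apply Rmin_r.
  destruct (Tfun_deriv r0 Hr0 eta Heta) as [dT HdT].
  destruct (cont_ed rinv t0 (rinv_cont t0 Ht0) dT (cond_pos dT)) as [dc [Hdc Hc]].
  assert (Hdp : 0 < Rmin dc t0) by (apply Rmin_pos; lra).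
  exists (mkposreal _ Hdp). intros h Hh0 Hh. simpl in Hh.
  assert (Hh1 : Rabs h < dc) by (eapply Rlt_le_trans; [exact Hh|apply Rmin_l]).
  assert (Hh2 : Rabs h < t0) by (eapply Rlt_le_trans; [exact Hh|apply Rmin_r]).
  assert (Htp : 0 < t0 + h) by (pose proof (Rle_abs (-h)); rewrite Rabs_Ropp in H; lra).
  destruct (rinv_spec (t0 + h) Htp) as [Hr HT].
  set (r := rinv (t0 + h)) in *.
  set (dl := r - r0).
  assert (Hdl : dl <> 0).
  { intros Hz. unfold dl in Hz. assert (r = r0) by lra. rewrite H in HT. lra. }
  assert (Hdl2 : Rabs dl < dT).
  { unfold dl, r, r0. apply Hc. replace (t0 + h - t0) with h by ring. auto. }
  specialize (HdT dl Hdl Hdl2). fold D0 in HdT.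
  replace (r0 + dl) with r in HdT by (unfold dl; ring).
  rewrite HT, HT0 in HdT.
  replace (t0 + h - t0) with h in HdT by ring.
  set (Q := h / dl) in *.
  assert (HQ : Q <> 0) by (unfold Q; apply Rmult_integral_contrapositive; split; auto; apply Rinv_neq_0_compat; auto).
  replace (dl / h) with (/ Q) by (unfold Q; field; auto).
  apply Rabs_def2 in HdT. destruct HdT as [Q1 Q2].
  assert (HQn : Q < D0 / 2) by lra.
  replace (/ Q - / D0) with ((D0 - Q) / (Q * D0)) by (field; split; lra).
  unfold Rdiv. rewrite Rabs_mult, Rabs_inv.
  rewrite (Rabs_right (Q * D0)) by nra.
  assert (HA : Rabs (D0 - Q) < eta) by (apply Rabs_def1; lra).
  apply (Rmult_lt_reg_r (Q * D0)); [nra|].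
  rewrite (Rmult_assoc (Rabs (D0 - Q))), Rinv_l by nra. rewrite Rmult_1_r.
  assert (HQD : D0 * D0 / 2 <= Q * D0) by nra.
  assert (eps * (D0 * D0) / 2 <= eps * (Q * D0)) by nra.
  lra.
Qed.

Lemma ln_sqrt' x : 0 < x -> ln (sqrt x) = ln x / 2.
Proof.
  intros H. pose proof (sqrt_lt_R0 x H).
  assert (ln x = ln (sqrt x * sqrt x)) by (rewrite sqrt_sqrt; lra).
  rewrite H1, ln_mult by lra. field.
Qed.

Lemma Cexp_mult a b c d : Cmult (Cexp (a, b)) (Cexp (c, d)) = Cexp (a + c, b + d).
Proof.
  unfold Cmult, Cexp; simpl. rewrite exp_plus, cos_plus, sin_plus. f_equal; ring.
Qed.

Lemma acos_atan' x y : y < 0 -> acos (x / sqrt (x ^ 2 + y ^ 2)) = PI / 2 - atan (x / - y).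
Proof.
  intros Hy.
  assert (HD : 0 < x ^ 2 + y ^ 2) by nra.
  set (s := sqrt (x ^ 2 + y ^ 2)).
  assert (Hs : 0 < s) by (apply sqrt_lt_R0; auto).
  assert (Hss : s * s = x ^ 2 + y ^ 2) by (apply sqrt_sqrt; lra).
  assert (Hu : -1 < x / s < 1).
  { split.
    - apply (Rmult_lt_reg_r s); auto. unfold Rdiv. rewrite Rmult_assoc, Rinv_l by lra. nra.
    - apply (Rmult_lt_reg_r s); auto. unfold Rdiv. rewrite Rmult_assoc, Rinv_l by lra. nra. }
  rewrite acos_asin by lra. rewrite asin_atan by auto.
  f_equal. f_equal.
  assert (H1 : 1 - (x / s)² = (- y / s) ^ 2) by (unfold Rsqr; field_simplify_eq; [nra|lra]).
  rewrite H1. rewrite sqrt_pow2 by (apply Rdiv_le_0_compat; lra).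
  field. lra.
Qed.

Lemma Clog_polar r th : Yf r th < 1 ->
  Clog (Cminus (Xf r th, Yf r th) Ci) = (ln (Dd r th) / 2, At r th - PI / 2).
Proof.
  intros HY.
  assert (Hw : Cminus (Xf r th, Yf r th) Ci = (Xf r th, Yf r th - 1)).
  { unfold Cminus, Cplus, Copp, Ci; simpl. f_equal; ring. }
  rewrite Hw. unfold Clog, Arg, Cmod, Re, Im; simpl.
  pose proof (Dd_pos r th HY) as HD. unfold Dd in HD.
  f_equal.
  - rewrite ln_sqrt' by auto. reflexivity.
  - destruct (Rle_dec 0 (Yf r th - 1)) as [H|H]; [lra|].
    change (Xf r th * (Xf r th * 1) + (Yf r th - 1) * ((Yf r th - 1) * 1)) with (Xf r th ^ 2 + (Yf r th - 1)^2). rewrite acos_atan' by lra. unfold At. replace (- (Yf r th - 1)) with (1 - Yf r th) by ring. ring.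
Qed.

Lemma phi_polar r th : Yf r th < 1 ->
  phi (Xf r th, Yf r th) = Cexp (r - ln (Dd r th) / 2 - (At r th - PI / 2), th + ln (Dd r th) / 2 - (At r th - PI / 2)).
Proof.
  intros HY. unfold phi. rewrite Clog_polar by auto.
  assert (Hz : (Xf r th, Yf r th) = Cexp (r, th)) by reflexivity.
  rewrite Hz.
  assert (Hm : Cmult (Cminus Ci 1) (ln (Dd r th) / 2, At r th - PI / 2)
     = (- (ln (Dd r th) / 2) - (At r th - PI / 2), ln (Dd r th) / 2 - (At r th - PI / 2))).
  { unfold Cmult, Cminus, Cplus, Copp, Ci, RtoC; simpl. f_equal; ring. }
  rewrite Hm, Cexp_mult. f_equal. f_equal; ring.
Qed.

Lemma Cexp_inj a b c d : Cexp (a, b) = Cexp (c, d) -> a = c /\ exists k : Z, b = d + 2 * IZR k * PI.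
Proof.
  intros H. unfold Cexp, Re, Im in H; simpl in H. injection H as H1 H2.
  pose proof (exp_pos a). pose proof (exp_pos c).
  pose proof (sin2_cos2 b) as Hb. pose proof (sin2_cos2 d) as Hd. unfold Rsqr in *.
  assert (Ha2 : exp a * exp a = exp c * exp c).
  { replace (exp a * exp a) with ((exp a * cos b) ^ 2 + (exp a * sin b) ^ 2) by (rewrite <- (Rmult_1_r (exp a * exp a)), <- Hb; ring).
    rewrite H1, H2. rewrite <- (Rmult_1_r (exp c * exp c)), <- Hd. ring. }
  assert (Hac : exp a = exp c) by nra.
  split; [apply exp_inv; auto|].
  rewrite Hac in H1, H2.
  assert (Hcb : cos b = cos d) by (apply (Rmult_eq_reg_l (exp c)); lra).
  assert (Hsb : sin b = sin d) by (apply (Rmult_eq_reg_l (exp c)); lra).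
  assert (Hc1 : cos (b - d) = 1) by (rewrite cos_minus, Hcb, Hsb; lra).
  replace (b - d) with (2 * ((b - d) / 2)) in Hc1 by field.
  rewrite cos_2a_sin in Hc1.
  assert (Hs0 : sin ((b - d) / 2) = 0) by nra.
  destruct (sin_eq_0_0 _ Hs0) as [k Hk]. exists k. lra.
Qed.

Lemma cos_shift th k : cos (th - 2 * IZR k * PI) = cos th.
Proof.
  rewrite cos_minus.
  assert (Hs : sin (IZR k * PI) = 0) by (apply sin_eq_0_1; exists k; auto).
  replace (2 * IZR k * PI) with (2 * (IZR k * PI)) by ring.
  rewrite cos_2a_sin, sin_2a, Hs. ring.
Qed.

Lemma sin_shift th k : sin (th - 2 * IZR k * PI) = sin th.
Proof.
  rewrite sin_minus.
  assert (Hs : sin (IZR k * PI) = 0) by (apply sin_eq_0_1; exists k; auto).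
  replace (2 * IZR k * PI) with (2 * (IZR k * PI)) by ring.
  rewrite cos_2a_sin, sin_2a, Hs. ring.
Qed.

Definition RHS t := Cmult (Cexp (Cmult (Cminus Ci 1) (RtoC t))) (phi (RtoC 1)).

Lemma one_polar : RtoC 1 = (Xf 0 0, Yf 0 0).
Proof. unfold RtoC, Xf, Yf. rewrite exp_0, cos_0, sin_0. f_equal; ring. Qed.

Lemma At00 : At 0 0 = PI / 4.
Proof. unfold At, Xf, Yf. rewrite exp_0, cos_0, sin_0. replace (1 * 1 / (1 - 1 * 0)) with 1 by field. apply atan_1. Qed.

Lemma Dd00 : Dd 0 0 = 2.
Proof. unfold Dd, Xf, Yf. rewrite exp_0, cos_0, sin_0. ring. Qed.

Lemma RHS_formula t : RHS t = Cexp (- t - ln 2 / 2 + PI / 4, t + ln 2 / 2 + PI / 4).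
Proof.
  unfold RHS.
  assert (Hm : Cmult (Cminus Ci 1) (RtoC t) = (- t, t)).
  { unfold Cmult, Cminus, Cplus, Copp, Ci, RtoC; simpl. f_equal; ring. }
  rewrite Hm. rewrite one_polar, phi_polar by (unfold Yf; rewrite sin_0; lra).
  rewrite At00, Dd00. rewrite Cexp_mult. f_equal. f_equal; lra.
Qed.

Lemma phi_eq_curve r th t : r < 0 -> E r th = 0 -> Tf r th = t -> phi (Xf r th, Yf r th) = RHS t.
Proof.
  intros Hr HE HT. rewrite phi_polar by (apply Y_lt1; auto). rewrite RHS_formula.
  unfold E, Tf in *. f_equal. f_equal; lra.
Qed.

Lemma curve_of_phi r th t : r < 0 -> phi (Xf r th, Yf r th) = RHS t ->
  exists k : Z, E r (th - 2 * IZR k * PI) = 0 /\ Tf r (th - 2 * IZR k * PI) = t.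
Proof.
  intros Hr H. rewrite phi_polar, RHS_formula in H by (apply Y_lt1; auto).
  apply Cexp_inj in H. destruct H as [Ha [k Hb]]. exists k.
  assert (HX : Xf r (th - 2 * IZR k * PI) = Xf r th) by (unfold Xf; rewrite cos_shift; auto).
  assert (HY : Yf r (th - 2 * IZR k * PI) = Yf r th) by (unfold Yf; rewrite sin_shift; auto).
  assert (HD : Dd r (th - 2 * IZR k * PI) = Dd r th) by (unfold Dd; rewrite HX, HY; auto).
  assert (HA : At r (th - 2 * IZR k * PI) = At r th) by (unfold At; rewrite HX, HY; auto).
  unfold E, Tf. rewrite HD, HA. split; lra.
Qed.

Lemma polar_form m th : Cmult (RtoC m) (Cexp (Cmult Ci (RtoC th))) = (m * cos th, m * sin th).
Proof.
  unfold Cmult, Cexp, Ci, RtoC, Re, Im; simpl.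
  replace (0 * th - 1 * 0) with 0 by ring. replace (0 * 0 + 1 * th) with th by ring.
  rewrite exp_0. f_equal; ring.
Qed.

Lemma Cexp_nz a b : Cexp (a, b) <> (0, 0).
Proof.
  intros H. unfold Cexp, Re, Im in H; simpl in H. injection H as H1 H2.
  pose proof (exp_pos a). pose proof (sin2_cos2 b). unfold Rsqr in *.
  assert (cos b = 0) by (apply (Rmult_eq_reg_l (exp a)); lra).
  assert (sin b = 0) by (apply (Rmult_eq_reg_l (exp a)); lra).
  nra.
Qed.

Lemma univ_point gamma Theta : tip_trace gamma Theta -> forall t, 0 < t ->
  Cmod (gamma t) = exp (rinv t) /\ exists k : Z, Theta t = thc (rinv t) + 2 * IZR k * PI.
Proof.
  intros [H0 [Hlt [Hphi [Hc [HT0 Hpol]]]]] t Ht.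
  set (m := Cmod (gamma t)).
  assert (Hg : gamma t = (m * cos (Theta t), m * sin (Theta t))).
  { rewrite (Hpol t) at 1 by lra. apply polar_form. }
  assert (Hm1 : m < 1) by (apply Hlt; auto).
  assert (Hm0 : 0 <= m) by apply Cmod_ge_0.
  assert (Hph : phi (gamma t) = RHS t) by (apply Hphi; lra).
  assert (Hmp : 0 < m).
  { destruct Hm0 as [|Hz]; auto. exfalso.
    rewrite Hg, <- Hz in Hph. rewrite RHS_formula in Hph.
    assert (phi (0 * cos (Theta t), 0 * sin (Theta t)) = (0, 0)).
    { unfold phi, Cmult; simpl. f_equal; ring. }
    rewrite H in Hph. symmetry in Hph. apply Cexp_nz in Hph. auto. }
  set (rho := ln m).
  assert (Hrho : exp rho = m) by (apply exp_ln; auto).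
  assert (Hr : rho < 0) by (unfold rho; rewrite <- ln_1; apply ln_increasing; lra).
  assert (Hg2 : gamma t = (Xf rho (Theta t), Yf rho (Theta t))) by (unfold Xf, Yf; rewrite Hrho; auto).
  rewrite Hg2 in Hph.
  destruct (curve_of_phi rho (Theta t) t Hr Hph) as [k [HE HT]].
  assert (Hth : Theta t - 2 * IZR k * PI = thc rho) by (apply thc_uniq; auto).
  assert (HTf : Tfun rho = t) by (unfold Tfun; rewrite <- Hth; auto).
  assert (Hri : rinv t = rho) by (apply rinv_uniq; auto).
  split.
  - rewrite Hri. auto.
  - exists k. rewrite Hri. lra.
Qed.

Lemma within_ed (Th : R -> R) t :
  filterlim Th (within (fun s => 0 <= s) (locally t)) (locally (Th t)) ->
  forall eps, 0 < eps -> exists d, 0 < d /\ forall y, Rabs (y - t) < d -> 0 <= y -> Rabs (Th y - Th t) < eps.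
Proof.
  intros H eps He.
  apply filterlim_locally with (eps := mkposreal eps He) in H.
  unfold within in H. destruct H as [d Hd]. exists d. split; [apply cond_pos|].
  intros y Hy Hy0. apply (Hd y); auto.
Qed.

Lemma within_cont (Th : R -> R) t : 0 < t ->
  filterlim Th (within (fun s => 0 <= s) (locally t)) (locally (Th t)) -> continuity_pt Th t.
Proof.
  intros Ht H. apply continuity_pt_filterlim. apply ed_cont. intros eps He.
  destruct (within_ed Th t H eps He) as [d [Hd Hd']].
  exists (Rmin d t). split; [apply Rmin_pos; lra|].
  intros y Hy. apply Hd'.
  - eapply Rlt_le_trans; [exact Hy|apply Rmin_l].
  - assert (Rabs (y - t) < t) by (eapply Rlt_le_trans; [exact Hy|apply Rmin_r]).
    apply Rabs_def2 in H0. lra.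
Qed.

Lemma g_cont t : 0 < t -> continuity_pt (fun u => thc (rinv u)) t.
Proof.
  intros Ht. apply (continuity_pt_comp rinv thc t).
  - apply continuity_pt_filterlim. apply rinv_cont; auto.
  - apply continuity_pt_filterlim. apply thc_cont. apply rinv_spec; auto.
Qed.

Lemma k_const gamma Theta : tip_trace gamma Theta ->
  exists k : Z, forall t, 0 < t -> Theta t = thc (rinv t) + 2 * IZR k * PI.
Proof.
  intros Htip.
  pose proof PI_gt3 as HPI.
  assert (Hcont : forall t, 0 < t -> continuity_pt Theta t).
  { intros t Ht. apply within_cont; auto. destruct Htip as [_ [_ [_ [Hc _]]]]. apply Hc. lra. }
  set (f := fun u => (Theta u - thc (rinv u)) / (2 * PI)).
  assert (Hf : forall u, 0 < u -> exists k : Z, f u = IZR k).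
  { intros u Hu. destruct (univ_point gamma Theta Htip u Hu) as [_ [k Hk]]. exists k.
    unfold f. rewrite Hk. field. lra. }
  assert (Hfc : forall u, 0 < u -> continuity_pt f u).
  { intros u Hu. unfold f. apply continuity_pt_div.
    - apply continuity_pt_minus; [apply Hcont; auto|apply g_cont; auto].
    - apply continuity_pt_const. intros ??; auto.
    - lra. }
  assert (Hab : forall a b ka kb, 0 < a -> a < b -> f a = IZR ka -> f b = IZR kb -> ka = kb).
  { intros a b ka kb Ha Hab Hfa Hfb.
    destruct (Z.lt_trichotomy ka kb) as [Hlt|[Heq|Hgt]]; auto; exfalso.
    - assert (Hle : IZR (ka + 1) <= IZR kb) by (apply IZR_le; lia). rewrite plus_IZR in Hle.
      destruct (Ranalysis5.IVT_interv (fun u => f u - (IZR ka + 1/2)) a b) as [u [Hu1 Hu2]].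
      + intros c Hc. apply continuity_pt_minus; [apply Hfc; lra|apply continuity_pt_const; intros ??; auto].
      + auto.
      + rewrite Hfa. lra.
      + rewrite Hfb. lra.
      + destruct (Hf u ltac:(lra)) as [ku Hku]. rewrite Hku in Hu2.
        assert (IZR (2 * (ku - ka)) = IZR 1) by (rewrite mult_IZR, minus_IZR; simpl; lra).
        apply eq_IZR in H. lia.
    - assert (Hle : IZR (kb + 1) <= IZR ka) by (apply IZR_le; lia). rewrite plus_IZR in Hle.
      destruct (Ranalysis5.IVT_interv (fun u => (IZR kb + 1/2) - f u) a b) as [u [Hu1 Hu2]].
      + intros c Hc. apply continuity_pt_minus; [apply continuity_pt_const; intros ??; auto|apply Hfc; lra].
      + auto.
      + rewrite Hfa. lra.
      + rewrite Hfb. lra.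
      + destruct (Hf u ltac:(lra)) as [ku Hku]. rewrite Hku in Hu2.
        assert (IZR (2 * (ku - kb)) = IZR 1) by (rewrite mult_IZR, minus_IZR; simpl; lra).
        apply eq_IZR in H. lia. }
  destruct (Hf 1 ltac:(lra)) as [k1 Hk1]. exists k1.
  intros t Ht. destruct (Hf t Ht) as [kt Hkt].
  assert (kt = k1).
  { destruct (Rtotal_order t 1) as [H|[H|H]].
    - apply (Hab t 1); auto.
    - subst. rewrite Hk1 in Hkt. apply eq_IZR. auto.
    - symmetry. apply (Hab 1 t); auto; lra. }
  subst kt. unfold f in Hkt.
  apply (Rmult_eq_compat_r (2 * PI)) in Hkt. field_simplify in Hkt; [|lra]. lra.
Qed.

Lemma ed_within (Th : R -> R) t :
  (forall eps, 0 < eps -> exists d, 0 < d /\ forall y, Rabs (y - t) < d -> 0 <= y -> Rabs (Th y - Th t) < eps) ->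
  filterlim Th (within (fun s => 0 <= s) (locally t)) (locally (Th t)).
Proof.
  intros H. apply filterlim_locally. intros eps.
  destruct (H eps (cond_pos eps)) as [d [Hd Hd']].
  unfold within. exists (mkposreal d Hd). intros y Hy Hy0. apply Hd'; auto.
Qed.

Lemma Cmod_polar r th : Cmod (Xf r th, Yf r th) = exp r.
Proof.
  unfold Cmod. pose proof (XY2 r th). simpl fst; simpl snd. rewrite H.
  apply sqrt_pow2. left. apply exp_pos.
Qed.

Lemma Cmod_one : Cmod (RtoC 1) = 1.
Proof. unfold Cmod, RtoC; simpl. replace (1 * (1 * 1) + 0 * (0 * 1)) with 1 by ring. apply sqrt_1. Qed.

Definition gam t := if Rlt_dec 0 t then (Xf (rinv t) (thc (rinv t)), Yf (rinv t) (thc (rinv t))) else RtoC 1.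
Definition The t := if Rlt_dec 0 t then thc (rinv t) else 0.

Lemma rinv_small d : 0 < d -> exists e, 0 < e /\ forall y, 0 < y < e -> -d < rinv y.
Proof.
  intros Hd. exists (Tfun (- d / 2)). split; [apply Tfun_pos; lra|].
  intros y Hy. destruct (rinv_spec y ltac:(lra)) as [Hr HT].
  destruct (Rlt_le_dec (-d) (rinv y)) as [|Hle]; auto. exfalso.
  pose proof (Tfun_decr (rinv y) (-d/2) ltac:(lra) ltac:(lra)). lra.
Qed.

Lemma existence : exists (gamma : R -> C) (Theta : R -> R), tip_trace gamma Theta.
Proof.
  exists gam, The. unfold tip_trace.
  pose proof PI_gt3 as HPI.
  split; [unfold gam; destruct (Rlt_dec 0 0); [lra|reflexivity]|].
  split.
  { intros t Ht. unfold gam. destruct (Rlt_dec 0 t); [|lra].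
    rewrite Cmod_polar. destruct (rinv_spec t Ht). rewrite <- exp_0. apply exp_increasing. lra. }
  split.
  { intros t Ht. change (phi (gam t) = RHS t). unfold gam. destruct (Rlt_dec 0 t) as [Ht'|Ht'].
    - destruct (rinv_spec t Ht') as [Hr HT]. apply phi_eq_curve; auto.
      apply thc_spec; auto.
    - rewrite RHS_formula. rewrite one_polar, phi_polar by (unfold Yf; rewrite sin_0; lra).
      rewrite At00, Dd00. assert (t = 0) by lra. subst. f_equal. f_equal; lra. }
  split.
  { intros t Ht. apply ed_within. intros eps He.
    destruct (Rlt_dec 0 t) as [Htp|Htp].
    - pose proof (g_cont t Htp) as Hg. apply continuity_pt_filterlim in Hg.
      destruct (cont_ed _ _ Hg eps He) as [d [Hd Hd']].
      exists (Rmin d t). split; [apply Rmin_pos; lra|].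
      intros y Hy Hy0.
      assert (Hy1 : Rabs (y - t) < d) by (eapply Rlt_le_trans; [exact Hy|apply Rmin_l]).
      assert (Hy2 : Rabs (y - t) < t) by (eapply Rlt_le_trans; [exact Hy|apply Rmin_r]).
      apply Rabs_def2 in Hy2.
      unfold The. destruct (Rlt_dec 0 y); [|lra]. destruct (Rlt_dec 0 t); [|lra]. apply Hd'; auto.
    - assert (t = 0) by lra. subst t.
      destruct (thc_lim0 (Rmin eps (PI / 8))) as [d [Hd Hd']].
      { split; [apply Rmin_pos; lra|]. eapply Rle_lt_trans; [apply Rmin_r|lra]. }
      destruct (rinv_small d Hd) as [e [He' Hsm]].
      exists e. split; auto. intros y Hy Hy0.
      unfold The. destruct (Rlt_dec 0 0); [lra|]. rewrite Rminus_0_r.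
      destruct (Rlt_dec 0 y) as [Hyp|Hyp].
      + rewrite Rminus_0_r in Hy. rewrite Rabs_right in Hy by lra.
        destruct (rinv_spec y Hyp) as [Hr _].
        eapply Rlt_le_trans; [apply Hd'; split; [apply Hsm; lra|auto]|apply Rmin_l].
      + rewrite Rabs_R0. lra. }
  split; [unfold The; destruct (Rlt_dec 0 0); [lra|reflexivity]|].
  intros t Ht. rewrite polar_form. unfold gam, The. destruct (Rlt_dec 0 t).
  - rewrite Cmod_polar. reflexivity.
  - rewrite Cmod_one, cos_0, sin_0. unfold RtoC. f_equal; ring.
Qed.

Lemma rinv_upper t : 0 < t -> rinv t <= - t + PI / 4 + ln 2 / 2.
Proof. intros Ht. destruct (rinv_spec t Ht) as [Hr HT]. pose proof (Tfun_upper _ Hr). lra. Qed.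

Theorem proposition3p1 :
  (exists (gamma : R -> C) (Theta : R -> R), tip_trace gamma Theta) /\
  (forall (gamma : R -> C) (Theta : R -> R), tip_trace gamma Theta ->
     (forall s t, 0 <= s -> s < t -> Cmod (gamma t) < Cmod (gamma s)) /\
     is_lim (fun t => Cmod (gamma t)) p_infty 0 /\
     (forall s t, 0 <= s -> s < t -> Theta s < Theta t) /\
     (forall t, 0 < t -> exists d, is_derive Theta t d /\ 0 < d) /\
     is_lim Theta p_infty p_infty).
Proof.
  split; [apply existence|].
  intros gamma Theta Htip.
  pose proof PI_gt3 as HPI.
  destruct (k_const gamma Theta Htip) as [k Hk].
  assert (Hm : forall t, 0 < t -> Cmod (gamma t) = exp (rinv t)) by (intros t Ht; apply (univ_point gamma Theta Htip t Ht)).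
  assert (Hincr : forall s t, 0 < s -> s < t -> Theta s < Theta t).
  { intros s t Hs Hst. rewrite (Hk s Hs), (Hk t ltac:(lra)).
    pose proof (rinv_decr s t Hs Hst). destruct (rinv_spec s Hs).
    pose proof (thc_decr _ _ H H0). lra. }
  destruct Htip as [H0 [Hlt [Hphi [Hc [HT0 Hpol]]]]].
  split; [|split; [|split; [|split]]].
  - intros s t Hs Hst. rewrite (Hm t ltac:(lra)).
    destruct (Req_dec s 0) as [Hs0|Hs0].
    + subst. rewrite H0, Cmod_one. rewrite <- exp_0. apply exp_increasing. apply rinv_spec. lra.
    + rewrite (Hm s ltac:(lra)). apply exp_increasing. apply rinv_decr; lra.
  - apply is_lim_spec. intros eps. simpl.
    set (C := PI / 4 + ln 2 / 2).
    exists (Rmax 1 (C - ln eps)). intros t Ht.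
    assert (Ht1 : 1 <= Rmax 1 (C - ln eps)) by apply Rmax_l.
    assert (Ht2 : C - ln eps <= Rmax 1 (C - ln eps)) by apply Rmax_r.
    rewrite (Hm t ltac:(lra)). rewrite Rminus_0_r. rewrite Rabs_right by (left; apply exp_pos).
    pose proof (rinv_upper t ltac:(lra)). fold C in H.
    rewrite <- (exp_ln eps) by apply cond_pos. apply exp_increasing. unfold C in *. lra.
  - intros s t Hs Hst. destruct (Req_dec s 0) as [Hs0|Hs0]; [|apply Hincr; lra].
    subst s. rewrite HT0.
    destruct (Rle_lt_dec (Theta t) 0) as [Hle|]; [exfalso|auto].
    pose proof (Hincr (t/2) t ltac:(lra) ltac:(lra)) as H1.
    destruct (within_ed Theta 0 (Hc 0 (Rle_refl 0)) (- Theta (t/2)) ltac:(lra)) as [d [Hd Hd']].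
    set (u := Rmin (d/2) (t/4)).
    assert (Hu0 : 0 < u) by (unfold u; apply Rmin_pos; lra).
    assert (Hu1 : u <= d/2) by apply Rmin_l. assert (Hu2 : u <= t/4) by apply Rmin_r.
    specialize (Hd' u). rewrite HT0, !Rminus_0_r in Hd'.
    assert (Hx : Rabs (Theta u) < - Theta (t / 2)) by (apply Hd'; [rewrite Rabs_right; lra|lra]).
    pose proof (Hincr u (t/2) Hu0 ltac:(lra)).
    apply Rabs_def2 in Hx. lra.
  - intros t Ht. destruct (rinv_spec t Ht) as [Hr HT].
    exists (thd (rinv t) * / Td (rinv t)). split.
    + apply (is_derive_ext_loc (fun u => thc (rinv u) + 2 * IZR k * PI)).
      * exists (mkposreal t Ht). intros y Hy. simpl in Hy. unfold ball in Hy; simpl in Hy.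
        unfold AbsRing_ball, abs, minus, plus, opp in Hy; simpl in Hy.
        apply Rabs_def2 in Hy. rewrite Hk; [reflexivity|lra].
      * apply is_derive_Reals.
        replace (thd (rinv t) * / Td (rinv t)) with (thd (rinv t) * / Td (rinv t) + 0) by ring.
        apply derivable_pt_lim_plus; [|apply derivable_pt_lim_const].
        apply (derivable_pt_lim_comp rinv thc t (/ Td (rinv t)) (thd (rinv t))).
        -- apply rinv_deriv; auto.
        -- apply thc_deriv; auto.
    + pose proof (thd_neg _ Hr). pose proof (Td_neg _ Hr).
      assert (0 < / - Td (rinv t)) by (apply Rinv_0_lt_compat; lra). rewrite Rinv_opp in H2. nra.
  - apply is_lim_spec. intros M. simpl.
    set (C := PI / 4 + ln 2 / 2).
    exists (Rmax 1 (M + C + 3 * PI / 2 - 2 * IZR k * PI)). intros t Ht.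
    assert (Ht1 : 1 <= Rmax 1 (M + C + 3 * PI / 2 - 2 * IZR k * PI)) by apply Rmax_l.
    assert (Ht2 : M + C + 3 * PI / 2 - 2 * IZR k * PI <= Rmax 1 (M + C + 3 * PI / 2 - 2 * IZR k * PI)) by apply Rmax_r.
    rewrite (Hk t ltac:(lra)).
    pose proof (rinv_upper t ltac:(lra)). fold C in H.
    destruct (rinv_spec t ltac:(lra)) as [Hr _].
    pose proof (thc_bounds _ Hr). unfold C in *. lra.
Qed.
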